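(* For every $d\in\mathbb N$, $\delta>1$ and $\gamma>\delta$ there is a constant $t_{min}=t_{min}(d,\gamma,\delta)>0$ such that the following holds. Let $G$ be any group generated by a set $X$ of $d$ elements, and let $g,h\in G$ be of infinite order with $w_g(n)\in\omega(\gamma^n)$ and $w_h(n)\in o(\delta^n)$ (growth functions with respect to $X$). Then $t(g^{\pm\infty},h^{\pm\infty})\ge t_{min}$ and $t(g^\infty,h^\infty)\ge t_{min}$.
   Context: $d_X$ denotes the word metric of $G$ with respect to $X$. For $g$ of infinite order, $g^\infty=\{g^n:n\in\mathbb N\}$ and $g^{\pm\infty}=\{g^k:k\in\mathbb Z\}$. For $\alpha>0$, $c\in\mathbb N$, cones are $\alpha\cdot g^\infty+c=\{v:\exists n\in\mathbb N,\ d_X(v,g^n)\le\alpha\, d_X(1,g^n)+c\}$ and $\alpha\cdot g^{\pm\infty}+c=\{v:\exists k\in\mathbb Z,\ d_X(v,g^k)\le\alpha\, d_X(1,g^k)+c\}$. For $x,y$ both forward orbits (or both orbits) write $x\subseteq\alpha\cdot y+c$ if every element of $x$ lies in the cone around $y$, set $s(x,y)=\inf\{\alpha>0:\exists c\in\mathbb N,\ x\subseteq\alpha\cdot y+c\text{ and } y\subseteq\alpha\cdot x+c\}$ and $t=\sqrt s$. The growth of $g$ is $w_g(n)=|\{i\in\mathbb Z: d_X(1,g^i)\le n\}|$. $w_g(n)\in\omega(\gamma^n)$ means $w_g(n)/\gamma^n\to\infty$; $w_h(n)\in o(\delta^n)$ means $w_h(n)/\delta^n\to0$. *)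

(* Defs.v *)
From Stdlib Require Import Reals ZArith List Lia Classical ClassicalEpsilon.
Open Scope R_scope.

Record grp := Grp {
  car :> Type;
  gmul : car -> car -> car;
  ginv : car -> car;
  gone : car;
  gmul_assoc : forall x y z, gmul x (gmul y z) = gmul (gmul x y) z;
  gmul_1l : forall x, gmul gone x = x;
  gmul_Vl : forall x, gmul (ginv x) x = gone
}.

Section GroupDefs.
Variable G : grp.

Fixpoint gpow (g : G) (n : nat) : G :=
  match n with O => gone G | S m => gmul G g (gpow g m) end.

Definition gpowZ (g : G) (k : Z) : G :=
  match k with
  | Z0 => gone G
  | Zpos p => gpow g (Pos.to_nat p)
  | Zneg p => ginv G (gpow g (Pos.to_nat p))
  end.

Definition inf_order (g : G) : Prop := forall n : nat, (0 < n)%nat -> gpow g n <> gone G.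

Definition letter (X : list G) (x : G) : Prop :=
  In x X \/ exists y, In y X /\ x = ginv G y.

Definition word_prod (w : list G) : G := fold_right (gmul G) (gone G) w.

Definition has_word_len (X : list G) (g : G) (n : nat) : Prop :=
  exists w, length w = n /\ Forall (letter X) w /\ word_prod w = g.

Definition generates (X : list G) : Prop := forall g : G, exists n, has_word_len X g n.

Definition wlen (X : list G) (g : G) : nat :=
  epsilon (inhabits 0%nat)
    (fun n => has_word_len X g n /\ forall m, has_word_len X g m -> (n <= m)%nat).

Definition dX (X : list G) (u v : G) : nat := wlen X (gmul G (ginv G u) v).

Definition cone {I : Type} (X : list G) (O : I -> G) (alpha : R) (c : nat) (v : G) : Prop :=
  exists i : I, INR (dX X v (O i)) <= alpha * INR (dX X (gone G) (O i)) + INR c.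

Definition sub_cone {I : Type} (X : list G) (x y : I -> G) (alpha : R) (c : nat) : Prop :=
  forall i : I, cone X y alpha c (x i).

End GroupDefs.

Definition is_glb (E : R -> Prop) (m : R) : Prop :=
  (forall x, E x -> m <= x) /\ (forall b, (forall x, E x -> b <= x) -> b <= m).

Definition Inf (E : R -> Prop) : R := epsilon (inhabits 0) (is_glb E).

Definition s_dist (G : grp) {I : Type} (X : list G) (x y : I -> G) : R :=
  Inf (fun alpha => 0 < alpha /\ exists c : nat, sub_cone G X x y alpha c /\ sub_cone G X y x alpha c).

Definition t_dist (G : grp) {I : Type} (X : list G) (x y : I -> G) : R :=
  sqrt (s_dist G X x y).

(* forward orbit g^∞ (indexed by nat) and full orbit g^{±∞} (indexed by Z) *)
Definition fwd_orbit (G : grp) (g : G) : nat -> G := gpow G g.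
Definition full_orbit (G : grp) (g : G) : Z -> G := gpowZ G g.

(* cardinality of a finite set of integers (0 if infinite) *)
Definition card_Z (P : Z -> Prop) : nat :=
  epsilon (inhabits 0%nat)
    (fun k => exists l : list Z, NoDup l /\ (forall i, In i l <-> P i) /\ length l = k).

Definition growth (G : grp) (X : list G) (g : G) (n : nat) : nat :=
  card_Z (fun i => (dX G X (gone G) (gpowZ G g i) <= n)%nat).

(* Main.v *)
Require Import Defs.
From Stdlib Require Import Reals ZArith List Lia Lra Psatz Classical ClassicalEpsilon.
Open Scope R_scope.


Lemma g_mulV (G : grp) (x : G) : gmul G x (ginv G x) = gone G.
Proof.
  rewrite <- (gmul_1l G (gmul G x (ginv G x))).
  rewrite <- (gmul_Vl G (ginv G x)) at 1.
  rewrite <- gmul_assoc. rewrite (gmul_assoc G (ginv G x) x).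
  rewrite gmul_Vl, gmul_1l. apply gmul_Vl.
Qed.

Lemma g_mul1 (G : grp) (x : G) : gmul G x (gone G) = x.
Proof. rewrite <- (gmul_Vl G x), gmul_assoc, g_mulV. apply gmul_1l. Qed.

Lemma g_cancel_l (G : grp) (a x y : G) : gmul G a x = gmul G a y -> x = y.
Proof.
  intro H. rewrite <- (gmul_1l G x), <- (gmul_1l G y), <- (gmul_Vl G a).
  rewrite <- !gmul_assoc, H. reflexivity.
Qed.

Lemma g_inv_unique (G : grp) (a b : G) : gmul G a b = gone G -> b = ginv G a.
Proof. intro H. apply (g_cancel_l G a). rewrite H, g_mulV. reflexivity. Qed.

Lemma g_invinv (G : grp) (x : G) : ginv G (ginv G x) = x.
Proof. symmetry. apply g_inv_unique. apply gmul_Vl. Qed.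

Lemma g_inv1 (G : grp) : ginv G (gone G) = gone G.
Proof. symmetry. apply g_inv_unique. apply gmul_1l. Qed.

Lemma g_invmul (G : grp) (a b : G) : ginv G (gmul G a b) = gmul G (ginv G b) (ginv G a).
Proof.
  symmetry. apply g_inv_unique.
  rewrite <- gmul_assoc, (gmul_assoc G b), g_mulV, gmul_1l. apply g_mulV.
Qed.

Lemma gpow_add (G : grp) (g : G) p q : gpow G g (p + q) = gmul G (gpow G g p) (gpow G g q).
Proof.
  induction p; simpl. now rewrite gmul_1l. rewrite IHp. apply gmul_assoc.
Qed.

Lemma gpow_inj (G : grp) (g : G) : inf_order G g -> forall a b, gpow G g a = gpow G g b -> a = b.
Proof.
  intros Hg.
  assert (forall a b, (a < b)%nat -> gpow G g a <> gpow G g b).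
  { intros a b Hab E. replace b with ((b - a) + a)%nat in E by lia.
    rewrite gpow_add in E.
    assert (gpow G g (b - a) = gone G).
    { assert (E2 := f_equal (fun z => gmul G z (ginv G (gpow G g a))) E). simpl in E2.
      rewrite g_mulV, <- gmul_assoc, g_mulV, g_mul1 in E2. auto. }
    apply (Hg (b - a)%nat); [lia|assumption]. }
  intros a b E. destruct (Nat.lt_trichotomy a b) as [h|[h|h]]; auto.
  exfalso; now apply (H a b).
  exfalso; now apply (H b a).
Qed.

Lemma ex_least (P : nat -> Prop) : (exists n, P n) -> exists n, P n /\ forall m, P m -> (n <= m)%nat.
Proof.
  intros [n Hn]. revert Hn. induction n as [n IH] using lt_wf_ind. intro Hn.
  destruct (classic (exists m, (m < n)%nat /\ P m)) as [[m [Hm Pm]]|Hno].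
  - exact (IH m Hm Pm).
  - exists n. split; auto. intros m Pm. destruct (Nat.le_gt_cases n m); auto.
    exfalso; apply Hno; eauto.
Qed.

Lemma wlen_spec (G : grp) (X : list G) (g : G) : generates G X ->
  has_word_len G X g (wlen G X g) /\ forall m, has_word_len G X g m -> (wlen G X g <= m)%nat.
Proof.
  intro HX. unfold wlen. apply epsilon_spec. apply ex_least. apply HX.
Qed.

Lemma word_prod_app (G : grp) (w1 w2 : list G) :
  word_prod G (w1 ++ w2) = gmul G (word_prod G w1) (word_prod G w2).
Proof.
  induction w1; simpl. now rewrite gmul_1l. rewrite IHw1. apply gmul_assoc.
Qed.

Lemma wlen_mul (G : grp) (X : list G) (a b : G) : generates G X ->
  (wlen G X (gmul G a b) <= wlen G X a + wlen G X b)%nat.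
Proof.
  intro HX. destruct (wlen_spec G X a HX) as [[w1 [L1 [F1 P1]]] _].
  destruct (wlen_spec G X b HX) as [[w2 [L2 [F2 P2]]] _].
  apply (proj2 (wlen_spec G X (gmul G a b) HX)).
  exists (w1 ++ w2). rewrite length_app, L1, L2. split; auto. split.
  apply Forall_app; auto. rewrite word_prod_app, P1, P2. reflexivity.
Qed.

Lemma word_prod_inv (G : grp) (w : list G) :
  word_prod G (rev (map (ginv G) w)) = ginv G (word_prod G w).
Proof.
  induction w; simpl. symmetry; apply g_inv1.
  rewrite word_prod_app, IHw, g_invmul. simpl. now rewrite g_mul1.
Qed.

Lemma wlen_inv (G : grp) (X : list G) (a : G) : generates G X ->
  (wlen G X (ginv G a) <= wlen G X a)%nat.
Proof.
  intro HX. destruct (wlen_spec G X a HX) as [[w [L [F P]]] _].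
  apply (proj2 (wlen_spec G X _ HX)).
  exists (rev (map (ginv G) w)). rewrite length_rev, length_map. split; auto. split.
  - apply Forall_rev. apply Forall_map. eapply Forall_impl; [|exact F].
    intros x [Hx|[y [Hy ->]]]; unfold letter. right; eauto. left; now rewrite g_invinv.
  - now rewrite word_prod_inv, P.
Qed.

Lemma wlen_inv_eq (G : grp) (X : list G) (a : G) : generates G X ->
  wlen G X (ginv G a) = wlen G X a.
Proof.
  intro HX. apply Nat.le_antisymm. now apply wlen_inv.
  rewrite <- (g_invinv G a) at 1. now apply wlen_inv.
Qed.

Lemma dX_1 (G : grp) (X : list G) (a : G) : dX G X (gone G) a = wlen G X a.
Proof. unfold dX. now rewrite g_inv1, gmul_1l. Qed.

Lemma dX_tri1 (G : grp) (X : list G) (a b : G) : generates G X ->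
  (wlen G X b <= wlen G X a + dX G X a b)%nat.
Proof.
  intro HX. unfold dX. replace b with (gmul G a (gmul G (ginv G a) b)) at 1.
  apply wlen_mul; auto. rewrite gmul_assoc, g_mulV. apply gmul_1l.
Qed.

Lemma dX_le (G : grp) (X : list G) (a b : G) : generates G X ->
  (dX G X a b <= wlen G X a + wlen G X b)%nat.
Proof.
  intro HX. unfold dX. eapply Nat.le_trans. apply wlen_mul; auto.
  rewrite wlen_inv_eq; auto.
Qed.

Definition alph (G : grp) (X : list G) : list G := gone G :: X ++ map (ginv G) X.

Fixpoint BL (G : grp) (X : list G) (r : nat) : list G :=
  match r with
  | O => gone G :: nil
  | S r => map (fun p => gmul G (fst p) (snd p)) (list_prod (alph G X) (BL G X r))
  end.

Lemma BL_length (G : grp) (X : list G) r : length (BL G X r) = Nat.pow (S (2 * length X)) r.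
Proof.
  induction r. reflexivity.
  change (BL G X (S r)) with (map (fun p => gmul G (fst p) (snd p)) (list_prod (alph G X) (BL G X r))).
  rewrite length_map, length_prod, IHr. unfold alph. simpl length. rewrite length_app, length_map. simpl. lia.
Qed.

Lemma BL_in (G : grp) (X : list G) : forall r w, Forall (letter G X) w -> (length w <= r)%nat ->
  In (word_prod G w) (BL G X r).
Proof.
  induction r; intros w F L.
  - destruct w; simpl in *; [now left | lia].
  - change (BL G X (S r)) with (map (fun p => gmul G (fst p) (snd p)) (list_prod (alph G X) (BL G X r))).
    apply in_map_iff. destruct w as [|a w].
    + exists (gone G, gone G). split. apply gmul_1l.
      apply in_prod. now left. apply (IHr nil); simpl; auto; lia.
    + exists (a, word_prod G w). split; auto. inversion F; subst.
      apply in_prod. unfold alph. right. apply in_or_app.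
      destruct H1 as [H|[y [Hy ->]]]; [left; auto | right; now apply in_map].
      apply IHr; auto. simpl in L; lia.
Qed.

Lemma BL_wlen (G : grp) (X : list G) r u : generates G X -> (wlen G X u <= r)%nat -> In u (BL G X r).
Proof.
  intros HX H. destruct (wlen_spec G X u HX) as [[w [L [F P]]] _]. subst u.
  apply BL_in; auto; lia.
Qed.

Lemma enum_fin (P : Z -> Prop) (b : Z -> bool) (Hb : forall i, b i = true <-> P i)
  {A : Type} (T : list A) (phi : Z -> A) (Hin : forall i, P i -> In (phi i) T)
  (Hinj : forall i i', P i -> P i' -> phi i = phi i' -> i = i') :
  exists l, NoDup l /\ (forall i, In i l <-> P i) /\ (length l <= length T)%nat.
Proof.
  set (e := fun t => epsilon (inhabits 0%Z) (fun i => P i /\ phi i = t)).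
  assert (He : forall i, P i -> e (phi i) = i).
  { intros i Pi. assert (S : P (e (phi i)) /\ phi (e (phi i)) = phi i).
    { unfold e. apply epsilon_spec. eauto. }
    destruct S. apply Hinj; auto. }
  exists (nodup Z.eq_dec (filter b (map e T))). split. apply NoDup_nodup. split.
  - intro i. rewrite nodup_In, filter_In, Hb. split; [tauto|]. intro Pi. split; auto.
    apply in_map_iff. exists (phi i). split; auto.
  - eapply Nat.le_trans. apply NoDup_incl_length. apply NoDup_nodup.
    intros x Hx. rewrite nodup_In, filter_In in Hx. apply (proj1 Hx).
    rewrite length_map. apply le_n.
Qed.

Lemma card_Z_eq (P : Z -> Prop) l : NoDup l -> (forall i, In i l <-> P i) -> card_Z P = length l.
Proof.
  intros N H.
  assert (S : exists l', NoDup l' /\ (forall i, In i l' <-> P i) /\ length l' = card_Z P).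
  { unfold card_Z.
    apply (epsilon_spec (inhabits 0%nat) (fun k => exists l0, NoDup l0 /\ (forall i, In i l0 <-> P i) /\ length l0 = k)).
    exists (length l), l. auto. }
  destruct S as [l' [N' [H' L']]]. rewrite <- L'.
  apply Nat.le_antisymm; apply NoDup_incl_length; auto; intros x Hx.
  apply H, H', Hx. apply H', H, Hx.
Qed.

Lemma card_le (P : Z -> Prop) (b : Z -> bool) (Hb : forall i, b i = true <-> P i)
  {A : Type} (T : list A) (phi : Z -> A) (Hin : forall i, P i -> In (phi i) T)
  (Hinj : forall i i', P i -> P i' -> phi i = phi i' -> i = i') :
  (card_Z P <= length T)%nat.
Proof.
  destruct (enum_fin P b Hb T phi Hin Hinj) as [l [N [H L]]]. now rewrite (card_Z_eq P l).
Qed.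

Lemma gpowZ_nat (G : grp) (g : G) a : gpowZ G g (Z.of_nat a) = gpow G g a.
Proof. destruct a. reflexivity. simpl. now rewrite SuccNat2Pos.id_succ. Qed.

Lemma wlen_gpowZ (G : grp) (X : list G) (g : G) i : generates G X ->
  wlen G X (gpowZ G g i) = wlen G X (gpow G g (Z.abs_nat i)).
Proof. intro HX. destruct i; simpl; auto. now rewrite wlen_inv_eq. Qed.

Definition Sset (G : grp) (X : list G) (g : G) (n : nat) : Z -> Prop :=
  fun i => (dX G X (gone G) (gpowZ G g i) <= n)%nat.

Lemma Sset_dec (G : grp) (X : list G) (g : G) (n : nat) :
  forall i, Nat.leb (dX G X (gone G) (gpowZ G g i)) n = true <-> Sset G X g n i.
Proof. intro i. unfold Sset. apply Nat.leb_le. Qed.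

Lemma sign_abs_inj (i i' : Z) : Z.ltb i 0 = Z.ltb i' 0 -> Z.abs_nat i = Z.abs_nat i' -> i = i'.
Proof.
  intros H1 H2. destruct (Z.ltb_spec i 0), (Z.ltb_spec i' 0); try discriminate; lia.
Qed.

Lemma Sset_enum (G : grp) (X : list G) (g : G) (n : nat) : generates G X -> inf_order G g ->
  exists l, NoDup l /\ (forall i, In i l <-> Sset G X g n i) /\ growth G X g n = length l.
Proof.
  intros HX Hg.
  destruct (enum_fin (Sset G X g n) _ (Sset_dec G X g n)
     (list_prod (true :: false :: nil) (BL G X n)) (fun i => (Z.ltb i 0, gpow G g (Z.abs_nat i))))
     as [l [N [H _]]].
  - intros i Hi. apply in_prod. destruct (Z.ltb i 0); simpl; auto.
    apply BL_wlen; auto. unfold Sset in Hi. rewrite dX_1, wlen_gpowZ in Hi; auto.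
  - intros i i' _ _ E. injection E; intros E2 E1. apply sign_abs_inj; auto.
    now apply (gpow_inj G g Hg).
  - exists l. split; auto. split; auto. unfold growth. apply card_Z_eq; auto.
Qed.

Lemma real_bounds (a w d k c m al : R) :
  0 <= a -> 0 <= c -> 1 <= m -> 0 < al -> al * (m + 1) <= 1 ->
  w <= m * k -> a <= w + d -> d <= al * a + c ->
  a <= (m + 1) * k + 2 * c /\ d <= k + 3 * c.
Proof.
  intros Ha Hc Hm Hal Halm Hw Hawd Hd.
  assert (p1 : al * a * (m + 1) <= a).
  { replace (al * a * (m + 1)) with (a * (al * (m + 1))) by ring.
    rewrite <- (Rmult_1_r a) at 2. apply Rmult_le_compat_l; auto. }
  assert (p2 : (m + 1) * d <= (m + 1) * (al * a + c)).
  { apply Rmult_le_compat_l; lra. }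
  assert (p3 : m * d <= m * k + (m + 1) * c) by nra.
  assert (p4 : d <= k + 2 * c).
  { assert (m * (d - k - 2 * c) <= 0) by nra. nra. }
  split; lra.
Qed.

Lemma main_count (G : grp) (X : list G) (g h : G) (al : R) (c M : nat) :
  generates G X -> inf_order G g -> inf_order G h ->
  (forall a : nat, exists j : Z, INR (dX G X (gpow G g a) (gpowZ G h j)) <=
      al * INR (dX G X (gone G) (gpowZ G h j)) + INR c) ->
  0 < al -> al * (INR M + 1) <= 1 -> (1 <= M)%nat ->
  forall k, (growth G X g (M * k) <= 2 * (growth G X h ((M + 1) * k + 2 * c) *
              Nat.pow (S (2 * length X)) (k + 3 * c)))%nat.
Proof.
  intros HX Hg Hh Hcone Hal HalM HM k.
  destruct (Sset_enum G X h ((M + 1) * k + 2 * c) HX Hh) as [Lh [NLh [HLh ELh]]].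
  rewrite ELh, <- (BL_length G X (k + 3 * c)).
  set (jf := fun a : nat => epsilon (inhabits 0%Z) (fun j => INR (dX G X (gpow G g a) (gpowZ G h j)) <=
      al * INR (dX G X (gone G) (gpowZ G h j)) + INR c)).
  assert (Hjf : forall a, INR (dX G X (gpow G g a) (gpowZ G h (jf a))) <=
      al * INR (dX G X (gone G) (gpowZ G h (jf a))) + INR c).
  { intro a. unfold jf. apply epsilon_spec. apply Hcone. }
  set (uf := fun a : nat => gmul G (ginv G (gpowZ G h (jf a))) (gpow G g a)).
  assert (Huf : forall a, gmul G (gpowZ G h (jf a)) (uf a) = gpow G g a).
  { intro a. unfold uf. rewrite gmul_assoc, g_mulV. apply gmul_1l. }
  unfold growth.
  replace (2 * (length Lh * length (BL G X (k + 3 * c))))%nat with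
     (length (list_prod (true :: false :: nil) (list_prod Lh (BL G X (k + 3 * c))))).
  2:{ rewrite !length_prod. reflexivity. }
  apply (card_le (Sset G X g (M * k)) _ (Sset_dec G X g (M * k)) _
     (fun i => (Z.ltb i 0, (jf (Z.abs_nat i), uf (Z.abs_nat i))))).
  - intros i Hi. set (a := Z.abs_nat i).
    unfold Sset in Hi. rewrite dX_1, wlen_gpowZ in Hi; auto. fold a in Hi.
    assert (T1 := dX_tri1 G X (gpow G g a) (gpowZ G h (jf a)) HX).
    assert (T2 := Hjf a). rewrite dX_1 in T2.
    destruct (real_bounds (INR (wlen G X (gpowZ G h (jf a)))) (INR (wlen G X (gpow G g a)))
       (INR (dX G X (gpow G g a) (gpowZ G h (jf a)))) (INR k) (INR c) (INR M) al)
      as [B1 B2]; auto using pos_INR.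
    + apply (le_INR 1). auto.
    + rewrite <- mult_INR. apply le_INR. auto.
    + rewrite <- plus_INR. apply le_INR. auto.
    + apply in_prod. destruct (Z.ltb i 0); simpl; auto.
      apply in_prod.
      * apply HLh. unfold Sset. rewrite dX_1. apply INR_le.
        rewrite plus_INR, !mult_INR, plus_INR. simpl (INR 1). simpl (INR 2). lra.
      * apply BL_wlen; auto.
        assert (Eu : uf a = ginv G (gmul G (ginv G (gpow G g a)) (gpowZ G h (jf a)))).
        { unfold uf. now rewrite g_invmul, g_invinv. }
        rewrite Eu. eapply Nat.le_trans. apply wlen_inv; auto. fold (dX G X (gpow G g a) (gpowZ G h (jf a))).
        apply INR_le. rewrite plus_INR, mult_INR. simpl (INR 3). lra.
  - intros i i' _ _ E. injection E; intros E3 E2 E1. apply sign_abs_inj; auto.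
    apply (gpow_inj G g Hg). rewrite <- Huf, <- Huf. now rewrite E2, E3.
Qed.

Lemma contra (wg wh : nat -> nat) (M c K : nat) (delta gamma : R) :
  1 < delta -> delta < gamma -> (1 <= M)%nat ->
  delta ^ (M + 1) * INR K <= gamma ^ M ->
  (forall k, (wg (M * k) <= 2 * (wh ((M + 1) * k + 2 * c) * Nat.pow K (k + 3 * c)))%nat) ->
  cv_infty (fun n => INR (wg n) / gamma ^ n) ->
  Un_cv (fun n => INR (wh n) / delta ^ n) 0 -> False.
Proof.
  intros Hd Hdg HM HK Hineq Hg Hh.
  destruct (Nat.eq_dec K 0) as [K0|K0].
  { (* then wg (M k) = 0 for k>=1 eventually *)
    destruct (Hg 0) as [Ng HNg].
    assert (A := HNg (M * (Ng + 1))%nat ltac:(nia)). specialize (Hineq (Ng + 1)%nat).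
    rewrite K0, Nat.pow_0_l in Hineq by lia. rewrite Nat.mul_0_r, Nat.mul_0_r in Hineq.
    assert (wg (M * (Ng + 1))%nat = 0%nat) by lia. rewrite H in A. simpl in A.
    unfold Rdiv in A. rewrite Rmult_0_l in A. lra. }
  set (C := 2 * delta ^ (2 * c) * INR K ^ (3 * c)).
  destruct (Hg C) as [Ng HNg].
  destruct (Hh 1 ltac:(lra)) as [Nh HNh].
  set (k := (Ng + Nh)%nat).
  assert (A := HNg (M * k)%nat ltac:(unfold k; nia)).
  assert (B := HNh ((M + 1) * k + 2 * c)%nat ltac:(unfold k; nia)).
  specialize (Hineq k).
  set (m := ((M + 1) * k + 2 * c)%nat) in *.
  unfold R_dist in B. rewrite Rminus_0_r in B.
  assert (Pd : 0 < delta ^ m) by (apply pow_lt; lra).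
  assert (Pg : 0 < gamma ^ (M * k)) by (apply pow_lt; lra).
  assert (PK : 0 < INR K) by (apply lt_0_INR; lia).
  assert (PKp : 0 < INR K ^ (k + 3 * c)) by (apply pow_lt; lra).
  assert (B' : INR (wh m) < delta ^ m).
  { apply Rabs_def2 in B. destruct B as [B _].
    apply (Rmult_lt_compat_r (delta ^ m)) in B; auto.
    unfold Rdiv in B. rewrite Rmult_assoc, Rinv_l, Rmult_1_r, Rmult_1_l in B; lra. }
  assert (A' : C * gamma ^ (M * k) < INR (wg (M * k)%nat)).
  { apply (Rmult_lt_compat_r (gamma ^ (M * k))) in A; auto.
    unfold Rdiv in A. rewrite Rmult_assoc, Rinv_l, Rmult_1_r in A; lra. }
  apply le_INR in Hineq. rewrite mult_INR, mult_INR, pow_INR in Hineq.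
  assert (E1 : delta ^ m = delta ^ (2 * c) * (delta ^ (M + 1)) ^ k).
  { unfold m. rewrite pow_add, pow_mult. ring. }
  assert (E2 : INR K ^ (k + 3 * c) = INR K ^ k * INR K ^ (3 * c)) by apply pow_add.
  assert (E3 : gamma ^ (M * k) = (gamma ^ M) ^ k) by apply pow_mult.
  assert (Q : (delta ^ (M + 1) * INR K) ^ k <= (gamma ^ M) ^ k).
  { apply pow_incr. split; auto. apply Rmult_le_pos. apply pow_le; lra. lra. }
  rewrite Rpow_mult_distr in Q.
  assert (Hx : INR (wh m) * INR K ^ (k + 3 * c) < delta ^ m * INR K ^ (k + 3 * c)).
  { apply Rmult_lt_compat_r; auto. }
  rewrite E1, E2 in Hx. rewrite E3 in A'. unfold C in A'.
  assert (0 < delta ^ (2 * c) * INR K ^ (3 * c)).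
  { apply Rmult_lt_0_compat; apply pow_lt; lra. }
  simpl (INR 2) in Hineq.
  assert (2 * (delta ^ (2 * c) * INR K ^ (3 * c)) * ((delta ^ (M + 1)) ^ k * INR K ^ k)
          <= 2 * (delta ^ (2 * c) * INR K ^ (3 * c)) * (gamma ^ M) ^ k).
  { apply Rmult_le_compat_l; lra. }
  nra.
Qed.

Lemma map_nodup_inj {A B : Type} (f : A -> B) (l : list A) :
  (forall x y, f x = f y -> x = y) -> NoDup l -> NoDup (map f l).
Proof.
  intros Hf N. induction N; simpl; constructor; auto.
  intro Hin. apply in_map_iff in Hin. destruct Hin as [y [E Hy]]. apply Hf in E. subst; auto.
Qed.

Lemma unbounded (G : grp) (X : list G) (h : G) : generates G X -> inf_order G h ->
  forall B, exists j : nat, (B <= wlen G X (gpow G h j))%nat.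
Proof.
  intros HX Hh B. apply NNPP. intro Hno.
  assert (All : forall j, (wlen G X (gpow G h j) <= B)%nat).
  { intro j. destruct (Nat.le_gt_cases (wlen G X (gpow G h j)) B); auto.
    exfalso. apply Hno. exists j. lia. }
  set (L := length (BL G X B)).
  assert (length (map (gpow G h) (seq 0 (S L))) <= L)%nat.
  { apply NoDup_incl_length. apply map_nodup_inj. apply gpow_inj; auto. apply seq_NoDup.
    intros x Hx. apply in_map_iff in Hx. destruct Hx as [j [<- _]]. apply BL_wlen; auto. }
  rewrite length_map, length_seq in H. lia.
Qed.

Lemma cone_two (G : grp) (X : list G) (h : G) (x : G) : generates G X -> inf_order G h ->
  exists j : nat, INR (dX G X x (gpow G h j)) <= 2 * INR (dX G X (gone G) (gpow G h j)) + INR 0.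
Proof.
  intros HX Hh. destruct (unbounded G X h HX Hh (wlen G X x)) as [j Hj].
  exists j. rewrite dX_1. assert (T := dX_le G X x (gpow G h j) HX).
  simpl (INR 0). apply le_INR in T. apply le_INR in Hj. rewrite plus_INR in T. lra.
Qed.

Lemma glb_ex (E : R -> Prop) : (exists x, E x) -> (forall x, E x -> 0 <= x) -> is_glb E (Inf E).
Proof.
  intros [x Ex] Hpos. unfold Inf. apply epsilon_spec.
  destruct (completeness (fun y => E (- y))) as [m [Hm1 Hm2]].
  - exists 0. intros y Ey. apply Hpos in Ey. lra.
  - exists (- x). now rewrite Ropp_involutive.
  - exists (- m). split.
    + intros z Ez. assert (- z <= m). { apply Hm1. now rewrite Ropp_involutive. } lra.
    + intros b Hb. assert (m <= - b).
      { apply Hm2. intros y Ey. apply Hb in Ey. lra. } lra.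
Qed.

Lemma t_bound (G : grp) {I : Type} (X : list G) (x y : I -> G) (a0 : R) :
  (exists al c, 0 < al /\ sub_cone G X x y al c /\ sub_cone G X y x al c) ->
  (forall al c, 0 < al -> sub_cone G X x y al c -> a0 <= al) ->
  sqrt a0 <= t_dist G X x y.
Proof.
  intros [al [c [H1 [H2 H3]]]] Hlow. unfold t_dist, s_dist. apply sqrt_le_1_alt.
  set (E := fun alpha => 0 < alpha /\ exists c : nat, sub_cone G X x y alpha c /\ sub_cone G X y x alpha c).
  assert (Hg : is_glb E (Inf E)).
  { apply glb_ex. exists al. split; eauto. intros z [Hz _]. lra. }
  apply (proj2 Hg). intros z [Hz [c' [Hc _]]]. eauto.
Qed.

Lemma lower (G : grp) (X : list G) (g h : G) (M : nat) (delta gamma : R) :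
  generates G X -> inf_order G g -> inf_order G h ->
  1 < delta -> delta < gamma -> (1 <= M)%nat ->
  delta ^ (M + 1) * INR (S (2 * length X)) <= gamma ^ M ->
  cv_infty (fun n => INR (growth G X g n) / gamma ^ n) ->
  Un_cv (fun n => INR (growth G X h n) / delta ^ n) 0 ->
  forall al c, 0 < al ->
  (forall a : nat, exists j : Z, INR (dX G X (gpow G g a) (gpowZ G h j)) <=
      al * INR (dX G X (gone G) (gpowZ G h j)) + INR c) ->
  1 / (INR M + 1) <= al.
Proof.
  intros HX Hg Hh Hd Hdg HM HK Cg Ch al c Hal Hc.
  destruct (Rle_lt_dec (1 / (INR M + 1)) al) as [L|L]; auto. exfalso.
  assert (PM : 0 < INR M + 1) by (generalize (pos_INR M); lra).
  assert (al * (INR M + 1) <= 1).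
  { apply (Rmult_lt_compat_r (INR M + 1)) in L; auto.
    unfold Rdiv in L. rewrite Rmult_assoc, Rinv_l in L; lra. }
  apply (contra (growth G X g) (growth G X h) M c (S (2 * length X)) delta gamma); auto.
  apply (main_count G X g h al c M); auto.
Qed.

Theorem theorem1p3 :
  forall (d : nat) (delta gamma : R), 1 < delta -> delta < gamma ->
  exists tmin : R, 0 < tmin /\
    forall (G : grp) (X : list G),
      length X = d -> NoDup X -> generates G X ->
      forall g h : G, inf_order G g -> inf_order G h ->
        cv_infty (fun n => INR (growth G X g n) / gamma ^ n) ->
        Un_cv (fun n => INR (growth G X h n) / delta ^ n) 0 ->
        tmin <= t_dist G X (full_orbit G g) (full_orbit G h) /\
        tmin <= t_dist G X (fwd_orbit G g) (fwd_orbit G h).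
Proof.
  intros d delta gamma Hd Hdg.
  set (K := INR (S (2 * d))).
  assert (PK : 0 < K) by (apply lt_0_INR; lia).
  destruct (pow_lt_1_zero (delta / gamma) ltac:(rewrite Rabs_right; [apply (Rmult_lt_reg_r gamma); unfold Rdiv; [lra|]; rewrite Rmult_assoc, Rinv_l; lra | apply Rle_ge; unfold Rdiv; apply Rmult_le_pos; [lra| apply Rlt_le, Rinv_0_lt_compat; lra]])
     (1 / (delta * K)) ltac:(unfold Rdiv; rewrite Rmult_1_l; apply Rinv_0_lt_compat, Rmult_lt_0_compat; lra))
    as [N HN].
  set (M := S N).
  assert (HK : delta ^ (M + 1) * K <= gamma ^ M).
  { specialize (HN M ltac:(unfold M; lia)).
    assert (Pg : 0 < gamma ^ M) by (apply pow_lt; lra).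
    assert (Pd : 0 < delta ^ M) by (apply pow_lt; lra).
    unfold Rdiv in HN. rewrite Rpow_mult_distr, pow_inv in HN.
    rewrite Rabs_right in HN.
    2:{ apply Rle_ge, Rmult_le_pos; [lra| apply Rlt_le, Rinv_0_lt_compat; lra]. }
    rewrite pow_add, pow_1.
    apply (Rmult_lt_compat_r (gamma ^ M * (delta * K))) in HN.
    2:{ apply Rmult_lt_0_compat; [lra| apply Rmult_lt_0_compat; lra]. }
    replace (delta ^ M * / gamma ^ M * (gamma ^ M * (delta * K))) with (delta ^ M * delta * K) in HN.
    2:{ field. lra. }
    replace (1 * / (delta * K) * (gamma ^ M * (delta * K))) with (gamma ^ M) in HN.
    2:{ field. split; lra. }
    lra. }
  exists (sqrt (1 / (INR M + 1))). split.
  { apply sqrt_lt_R0. unfold Rdiv. rewrite Rmult_1_l. apply Rinv_0_lt_compat.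
    generalize (pos_INR M); lra. }
  intros G X HXd _ HX g h Hg Hh Cg Ch.
  assert (HK' : delta ^ (M + 1) * INR (S (2 * length X)) <= gamma ^ M) by (rewrite HXd; exact HK).
  assert (HM : (1 <= M)%nat) by (unfold M; lia).
  split; apply t_bound.
  - exists 2, 0%nat. split; [lra|]. split.
    + intro i. destruct (cone_two G X h (full_orbit G g i) HX Hh) as [j Hj].
      exists (Z.of_nat j). unfold full_orbit. now rewrite gpowZ_nat.
    + intro i. destruct (cone_two G X g (full_orbit G h i) HX Hg) as [j Hj].
      exists (Z.of_nat j). unfold full_orbit. now rewrite gpowZ_nat.
  - intros al c Hal Hc. apply (lower G X g h M delta gamma HX Hg Hh Hd Hdg HM HK' Cg Ch al c Hal).
    intro a. destruct (Hc (Z.of_nat a)) as [j Hj]. exists j. unfold full_orbit in Hj.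
    now rewrite gpowZ_nat in Hj.
  - exists 2, 0%nat. split; [lra|]. split.
    + intro i. apply (cone_two G X h (fwd_orbit G g i) HX Hh).
    + intro i. apply (cone_two G X g (fwd_orbit G h i) HX Hg).
  - intros al c Hal Hc. apply (lower G X g h M delta gamma HX Hg Hh Hd Hdg HM HK' Cg Ch al c Hal).
    intro a. destruct (Hc a) as [j Hj]. exists (Z.of_nat j). unfold fwd_orbit in Hj.
    now rewrite gpowZ_nat.
Qed.
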